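(* Let $\Omega$ be the solution of $\Omega e^\Omega=1$, let $c=\frac{1}{1+e^\Omega}$, and define $g:[0,1]\to[0,1]$ by $g(y)=\frac{c}{1-y}$ for $y<\frac{1-2c}{1-c}$, $g(y)=1-c$ for $\frac{1-2c}{1-c}\le y<1$, and $g(1)=1$. For $\tau,\gamma,\theta\in[0,1]$ let $$F(\tau,\gamma,\theta)=\int_0^\tau g(y)\,dy+\int_0^\gamma g(y)\,dy+(1-\tau)\big(1-\gamma-(1-\theta)g(\theta)\big)+\gamma\int_\tau^1\min\{g(y),1-g(\theta)\}\,dy.$$ Then $F(\tau,\gamma,\theta)\ge\Omega$ for all $\tau\in[0,1]$ and all $0\le\gamma\le\theta\le1$. *)

(* Defs.v *)
From Stdlib Require Import Reals Lra.
Open Scope R_scope.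

Definition cst (Om : R) : R := 1 / (1 + exp Om).

(* g : [0,1] -> [0,1]; values outside [0,1] are irrelevant. *)
Definition g (c y : R) : R :=
  if Rlt_dec y ((1 - 2 * c) / (1 - c)) then c / (1 - y)
  else if Rlt_dec y 1 then 1 - c
  else 1.

Definition hmin (c th : R) : R -> R := fun y => Rmin (g c y) (1 - g c th).

(* F(tau,gamma,theta), integrals given as Riemann integrals (their value does
   not depend on the integrability proofs). *)
Definition F (c tau gam th : R)
  (p1 : Riemann_integrable (g c) 0 tau)
  (p2 : Riemann_integrable (g c) 0 gam)
  (p3 : Riemann_integrable (hmin c th) tau 1) : R :=
  RiemannInt p1 + RiemannInt p2
  + (1 - tau) * (1 - gam - (1 - th) * g c th)
  + gam * RiemannInt p3.

(* Main.v *)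
Require Import Defs.
From Stdlib Require Import Reals Lra Psatz.
From Coquelicot Require Import Coquelicot.
Open Scope R_scope.

Lemma om_facts (Om : R) : Om * exp Om = 1 ->
  1/2 < Om /\ Om < 1 /\ ln Om = - Om /\ cst Om = Om / (1 + Om).
Proof.
  intros h.
  assert (he : 0 < exp Om) by apply exp_pos.
  assert (hp : 0 < Om).
  { destruct (Rlt_or_le 0 Om) as [H|H]; auto. nra. }
  assert (h1 := exp_ineq1_le Om).
  assert (hl1 : Om < 1) by nra.
  assert (e12 : exp (1/2) < 2).
  { assert (E : exp (1/2) * exp (1/2) = exp 1) by (rewrite <- exp_plus; f_equal; lra).
    assert (h3 := exp_le_3). assert (0 < exp (1/2)) by apply exp_pos. nra. }
  split.
  { destruct (Rlt_or_le (1/2) Om) as [H|H]; auto.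
    assert (exp Om <= exp (1/2)).
    { destruct H as [H|H]. left; apply exp_increasing; auto. subst; lra. }
    nra. }
  split; auto.
  split.
  { assert (Om = exp (- Om)). { rewrite exp_Ropp. field_simplify_eq; lra. }
    rewrite H at 1. apply ln_exp. }
  unfold cst. assert (exp Om = / Om) by (field_simplify_eq; lra).
  rewrite H. field; lra.
Qed.

Lemma g_thr Om : Om * exp Om = 1 -> (1 - 2 * cst Om) / (1 - cst Om) = 1 - Om.
Proof. intros h; destruct (om_facts Om h) as (h1&h2&h3&h4). rewrite h4. field. lra. Qed.

Lemma G_lo Om x : Om * exp Om = 1 -> 0 <= x <= 1 - Om ->
  is_RInt (g (cst Om)) 0 x (- cst Om * ln (1 - x)).
Proof.
  intros h hx. destruct (om_facts Om h) as (h1&h2&h3&h4).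

  apply is_RInt_ext with (fun y => cst Om / (1 - y)).
  { intros y hy. rewrite Rmin_left in hy by lra. rewrite Rmax_right in hy by lra.
    unfold g. rewrite g_thr by auto. destruct (Rlt_dec y (1 - Om)); [reflexivity|lra]. }
  assert (E : - cst Om * ln (1 - x) = minus (- cst Om * ln (1 - x)) (- cst Om * ln (1 - 0))).
  { rewrite Rminus_0_r, ln_1. unfold minus, plus, opp; simpl. ring. }
  rewrite E.
  apply (is_RInt_derive (fun y => - cst Om * ln (1 - y))).
  - intros y hy. rewrite Rmin_left in hy by lra. rewrite Rmax_right in hy by lra.
    auto_derive. lra. field. lra.
  - intros y hy. rewrite Rmin_left in hy by lra. rewrite Rmax_right in hy by lra.
    apply (ex_derive_continuous (K:=R_AbsRing) (V:=R_NormedModule)). auto_derive. lra.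
Qed.

Lemma G_hi Om x : Om * exp Om = 1 -> 1 - Om <= x <= 1 ->
  is_RInt (g (cst Om)) 0 x (cst Om * Om + (1 - cst Om) * (x - (1 - Om))).
Proof.
  intros h hx. destruct (om_facts Om h) as (h1&h2&h3&h4).
  assert (E : cst Om * Om + (1 - cst Om) * (x - (1 - Om)) =
     plus (- cst Om * ln (1 - (1 - Om))) (scal (x - (1 - Om)) (1 - cst Om))).
  { replace (1 - (1 - Om)) with Om by ring. rewrite h3.
    unfold plus, scal; simpl. unfold mult; simpl. ring. }
  rewrite E. apply (is_RInt_Chasles (V:=R_NormedModule)) with (1 - Om).
  - apply G_lo; auto. lra.
  - apply is_RInt_ext with (fun _ => 1 - cst Om).
    + intros y hy. rewrite Rmin_left in hy by lra. rewrite Rmax_right in hy by lra.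
      unfold g. rewrite g_thr by auto.
      destruct (Rlt_dec y (1 - Om)); [lra|]. destruct (Rlt_dec y 1); [reflexivity|lra].
    + apply (is_RInt_const (V:=R_NormedModule)).
Qed.

Lemma G_val Om x (p : Riemann_integrable (g (cst Om)) 0 x) : Om * exp Om = 1 -> 0 <= x <= 1 ->
  (x <= 1 - Om /\ RiemannInt p = - cst Om * ln (1 - x)) \/
  (1 - Om <= x /\ RiemannInt p = cst Om * Om + (1 - cst Om) * (x - (1 - Om))).
Proof.
  intros h hx. rewrite <- RInt_Reals.
  destruct (Rle_or_lt x (1 - Om)).
  - left. split; auto. apply is_RInt_unique. apply G_lo; auto. lra.
  - right. split. lra. apply is_RInt_unique. apply G_hi; auto. lra.
Qed.

Lemma ln_le_xm1 x : 0 < x -> ln x <= x - 1.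
Proof. intros hx. assert (h := exp_ineq1_le (ln x)). rewrite exp_ln in h; lra. Qed.

Lemma H_ineq Om c tau gam G1 G2 :
  1/2 < Om -> Om < 1 -> ln Om = - Om -> c * (1 + Om) = Om ->
  0 <= tau <= 1 -> 0 <= gam <= 1 ->
  ((tau <= 1 - Om /\ G1 = - c * ln (1 - tau)) \/
   (1 - Om <= tau /\ G1 = c * Om + (1 - c) * (tau - (1 - Om)))) ->
  ((gam <= 1 - Om /\ G2 = - c * ln (1 - gam)) \/
   (1 - Om <= gam /\ G2 = c * Om + (1 - c) * (gam - (1 - Om)))) ->
  G1 + G2 + (1 - c) * (1 - tau) * (1 - gam) >= Om.
Proof.
  intros h1 h2 h3 hc ht hg H1 H2.
  assert (c1 : (1 - c) * Om = c) by nra.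
  assert (cpos : 0 < c) by nra.
  assert (clt : c < 1/2) by nra.
  destruct H1 as [[a1 e1]|[a1 e1]]; destruct H2 as [[a2 e2]|[a2 e2]]; subst G1 G2.
  - assert (hu : 0 < 1 - tau) by lra. assert (hw : 0 < 1 - gam) by lra.
    remember (1 - tau) as u. remember (1 - gam) as w.
    assert (hL := ln_le_xm1 (u * w / Om) ltac:(apply Rdiv_lt_0_compat; nra)).
    unfold Rdiv in hL.
    assert (hO : 0 < / Om) by (apply Rinv_0_lt_compat; lra).
    assert (huw : 0 < u * w) by nra.
    rewrite (ln_mult (u * w) (/ Om) huw hO), (ln_mult u w hu hw), (ln_Rinv Om ltac:(lra)), h3 in hL.
    assert (E : c * (u * w * / Om) = (1 - c) * u * w).
    { rewrite <- c1 at 1. field. lra. }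
    assert (c * (ln u + ln w + - - Om) <= c * (u * w * / Om - 1)) by (apply Rmult_le_compat_l; lra).
    nra.
  - assert (hw : 0 < 1 - tau) by lra.
    assert (hL := ln_le_xm1 _ hw).
    assert (c * ln (1 - tau) <= c * (1 - tau - 1)) by (apply Rmult_le_compat_l; lra).
    assert (0 <= tau * ((1 - c) * (Om - (1 - gam)))) by (apply Rmult_le_pos; [lra|apply Rmult_le_pos; lra]).
    nra.
  - assert (hw : 0 < 1 - gam) by lra.
    assert (hL := ln_le_xm1 _ hw).
    assert (c * ln (1 - gam) <= c * (1 - gam - 1)) by (apply Rmult_le_compat_l; lra).
    assert (0 <= gam * ((1 - c) * (Om - (1 - tau)))) by (apply Rmult_le_pos; [lra|apply Rmult_le_pos; lra]).
    nra.
  - assert (0 <= (1 - c) * ((Om - (1 - tau)) * gam)) by (apply Rmult_le_pos; [lra|apply Rmult_le_pos; lra]).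
    assert (0 <= (1 - c) * ((Om - (1 - gam)) * (1 - Om))) by (apply Rmult_le_pos; [lra|apply Rmult_le_pos; lra]).
    assert (0 <= (1 - c) * (Om * (2 * Om - 1))) by (apply Rmult_le_pos; [lra|apply Rmult_le_pos; lra]).
    assert (c * Om = (1 - c) * Om * Om) by (rewrite c1; ring).
    nra.
Qed.

Theorem mainTheorem12 (Om : R) (hOm : Om * exp Om = 1)
  (tau gam th : R) (htau0 : 0 <= tau) (htau1 : tau <= 1)
  (hgam0 : 0 <= gam) (hgamth : gam <= th) (hth1 : th <= 1)
  (p1 : Riemann_integrable (g (cst Om)) 0 tau)
  (p2 : Riemann_integrable (g (cst Om)) 0 gam)
  (p3 : Riemann_integrable (hmin (cst Om) th) tau 1) :
  F (cst Om) tau gam th p1 p2 p3 >= Om.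
Proof.
  destruct (om_facts Om hOm) as (h1&h2&h3&h4).
  assert (hc : cst Om * (1 + Om) = Om) by (rewrite h4; field; lra).
  assert (cpos : 0 < cst Om) by nra.
  assert (clt : cst Om < 1/2) by nra.
  assert (c1 : (1 - cst Om) * Om = cst Om) by nra.
  assert (HG := H_ineq Om (cst Om) tau gam (RiemannInt p1) (RiemannInt p2) h1 h2 h3 hc
     ltac:(lra) ltac:(lra) (G_val Om tau p1 hOm ltac:(lra)) (G_val Om gam p2 hOm ltac:(lra))).
  assert (hgy : forall y, 0 <= y < 1 -> cst Om <= g (cst Om) y).
  { intros y hy. unfold g. rewrite g_thr by auto.
    destruct (Rlt_dec y (1 - Om)).
    - apply (Rmult_le_reg_r (1 - y)); [lra|]. unfold Rdiv. rewrite Rmult_assoc, Rinv_l by lra. nra.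
    - destruct (Rlt_dec y 1); lra. }
  unfold F.
  destruct (Rlt_or_le th 1) as [hth|hth].
  - assert (hgt : g (cst Om) th <= 1 - cst Om /\ (1 - th) * g (cst Om) th <= cst Om).
    { unfold g. rewrite g_thr by auto. destruct (Rlt_dec th (1 - Om)).
      - split.
        + apply (Rmult_le_reg_r (1 - th)); [lra|]. unfold Rdiv. rewrite Rmult_assoc, Rinv_l by lra. nra.
        + right. field. lra.
      - destruct (Rlt_dec th 1); [|lra]. split; nra. }
    assert (HJ : RiemannInt (RiemannInt_P14 tau 1 (cst Om)) <= RiemannInt p3).
    { apply RiemannInt_P19; auto. intros y hy. unfold fct_cte, hmin.
      apply Rmin_glb. apply hgy; lra. lra. }
    rewrite RiemannInt_P15 in HJ.
    assert (0 <= (1 - tau) * (cst Om - (1 - th) * g (cst Om) th)) by (apply Rmult_le_pos; lra).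
    assert (0 <= gam * (RiemannInt p3 - cst Om * (1 - tau))) by (apply Rmult_le_pos; lra).
    nra.
  - assert (th = 1) by lra. subst th.
    assert (HJ : RiemannInt (RiemannInt_P14 tau 1 0) <= RiemannInt p3).
    { apply RiemannInt_P19; auto. intros y hy. unfold fct_cte, hmin.
      apply Rmin_glb. assert (cst Om <= g (cst Om) y) by (apply hgy; lra). lra.
      unfold g. rewrite g_thr by auto. destruct (Rlt_dec 1 (1 - Om)); [lra|].
      destruct (Rlt_dec 1 1); lra. }
    rewrite RiemannInt_P15 in HJ.
    assert (0 <= cst Om * ((1 - tau) * (1 - gam))) by (apply Rmult_le_pos; [lra|apply Rmult_le_pos; lra]).
    assert (0 <= gam * RiemannInt p3) by (apply Rmult_le_pos; lra).
    replace ((1 - 1) * g (cst Om) 1) with 0 by ring.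
    nra.
Qed.
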